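(* Let $\mathcal{X},\mathcal{Y}$ be finite sets and $P$ a joint probability mass function on $\mathcal{X}\times\mathcal{Y}$ with $P(x,y)>0$ for all $(x,y)$. For every conditional guessing function $G(\cdot|\cdot)$, every $\rho>0$ and every $q\in\mathbb{R}$, $$ E_q[G(X|Y)^\rho]\;\geq\;(1+\ln|\mathcal{X}|)^{-\rho}\,\frac{\sum_{y\in\mathcal{Y}}\left[\sum_{x\in\mathcal{X}}P(x,y)^{\frac{q}{1+\rho}}\right]^{1+\rho}}{\sum_{y\in\mathcal{Y}}\sum_{x\in\mathcal{X}}P(x,y)^q}. $$
   Context: A conditional guessing function is a map $G(\cdot|\cdot)$ on $\mathcal{X}\times\mathcal{Y}$ such that for each $y\in\mathcal{Y}$, $x\mapsto G(x|y)$ is a bijection from $\mathcal{X}$ onto $\{1,\dots,|\mathcal{X}|\}$. For $q\in\mathbb{R}$ and a function $F$ on $\mathcal{X}\times\mathcal{Y}$, the $q$-normalized expectation under $P$ is $E_q[F(X,Y)]=\frac{\sum_{x,y}F(x,y)P(x,y)^q}{\sum_{x,y}P(x,y)^q}$. *)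

(* Defs.v *)
From mathcomp Require Import all_boot.
From Stdlib Require Import Reals.

Set Implicit Arguments.
Unset Strict Implicit.

Open Scope R_scope.

Definition sumR (T : finType) (f : T -> R) : R :=
  List.fold_right Rplus 0 (List.map f (enum T)).

Definition is_cond_guessing (X Y : finType) (G : X -> Y -> nat) : Prop :=
  forall y : Y,
    (forall x : X, (1 <= G x y)%coq_nat /\ (G x y <= #|X|)%coq_nat) /\
    (forall x1 x2 : X, G x1 y = G x2 y -> x1 = x2) /\
    (forall k : nat, (1 <= k)%coq_nat -> (k <= #|X|)%coq_nat ->
       exists x : X, G x y = k).

Definition Eq_norm (X Y : finType) (P : X -> Y -> R) (q : R)
    (F : X -> Y -> R) : R :=
  sumR (fun x => sumR (fun y => F x y * Rpower (P x y) q)) /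
  sumR (fun x => sumR (fun y => Rpower (P x y) q)).

(* Main.v *)
Require Import Defs.
From mathcomp Require Import all_boot.
From Stdlib Require Import Reals Lra Lia Permutation.
Open Scope R_scope.

Lemma ln_le_xm1 x : 0 < x -> ln x <= x - 1.
Proof. intro Hx. have := exp_ineq1_le (ln x). rewrite exp_ln //. lra. Qed.

Lemma bern x r : 0 < x -> 1 <= r -> 1 + r * (x - 1) <= Rpower x r.
Proof.
move=> Hx Hr.
have -> : r = 1 + (r - 1) by ring.
rewrite Rpower_plus Rpower_1 //.
have h1 := exp_ineq1_le ((r - 1) * ln x).
have h2 := ln_le_xm1 (/ x) (Rinv_0_lt_compat _ Hx).
rewrite ln_Rinv // in h2.
have h3 : x - x * ln x <= 1.
  have : x * (- ln x) <= x * (/ x - 1) by apply Rmult_le_compat_l; lra.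
  rewrite Rmult_minus_distr_l Rinv_r; lra.
rewrite /Rpower.
have h4 : x * (1 + (r - 1) * ln x) <= x * exp ((r - 1) * ln x)
  by apply Rmult_le_compat_l; lra.
nra.
Qed.

Lemma tangent m t p : 0 < m -> 0 < t -> 1 <= p ->
  Rpower m p + p * Rpower m (p - 1) * (t - m) <= Rpower t p.
Proof.
move=> Hm Ht Hp.
have Htm : 0 < t / m by apply Rdiv_lt_0_compat.
have -> : t = m * (t / m) by field; lra.
rewrite -Rpower_mult_distr //.
have hb := @bern (t / m) p Htm Hp.
have -> : Rpower m p = Rpower m (p - 1) * m.
  rewrite -[X in _ = _ * X](Rpower_1 m) // -Rpower_plus; f_equal; ring.
have hpos : 0 < Rpower m (p - 1) by apply exp_pos.
have : Rpower m (p - 1) * m * (1 + p * (t / m - 1)) <= Rpower m (p - 1) * m * Rpower (t / m) p.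
  apply Rmult_le_compat_l => //; nra.
have -> : Rpower m (p - 1) * m * (1 + p * (t / m - 1)) =
  Rpower m (p - 1) * m + p * Rpower m (p - 1) * (m * (t / m) - m) by field; lra.
lra.
Qed.
Set Implicit Arguments.

Definition lsum {A : Type} (l : list A) (f : A -> R) := List.fold_right Rplus 0 (List.map f l).

Lemma lsum_cons (A : Type) (x : A) l f : lsum (x :: l) f = f x + lsum l f.
Proof. by []. Qed.

Lemma lsum_lin (A : Type) (l : list A) a b f h :
  lsum l (fun x => a * f x + b * h x) = a * lsum l f + b * lsum l h.
Proof. elim: l => [|x l IH] /=; rewrite /lsum /= ?IH; [ring|]. rewrite /lsum in IH. rewrite IH; ring. Qed.

Lemma lsum_ext (A : Type) (l : list A) f h : (forall x, f x = h x) -> lsum l f = lsum l h.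
Proof. move=> e; elim: l => [|x l IH] //=; rewrite /lsum /=; rewrite /lsum in IH; rewrite IH e //. Qed.

Lemma lsum_le (A : Type) (l : list A) f h : (forall x, f x <= h x) -> lsum l f <= lsum l h.
Proof. move=> e; elim: l => [|x l IH] /=; rewrite /lsum /=; [lra|]; rewrite /lsum in IH; have := e x; lra. Qed.

Lemma lsum_pos (A : Type) (l : list A) f : l <> nil -> (forall x, 0 < f x) -> 0 < lsum l f.
Proof.
move=> nn e; elim: l nn => [|x l IH] nn //=; rewrite /lsum /=; rewrite /lsum in IH.
case: l IH {nn} => [|y l] IH /=; first by have := e x; lra.
have := IH ltac:(done); have := e x; rewrite /=; lra.
Qed.

Lemma lsum_exch (A B : Type) (l1 : list A) (l2 : list B) f :
  lsum l1 (fun x => lsum l2 (f x)) = lsum l2 (fun y => lsum l1 (fun x => f x y)).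
Proof.
elim: l1 => [|x l IH] /=.
  rewrite /lsum /=; elim: l2 => [|y l2 IH2] //=; rewrite -IH2; ring.
rewrite lsum_cons IH.
rewrite (lsum_ext l2 (fun y => lsum (x :: l) (f^~ y)) (fun y => 1 * f x y + 1 * lsum l (f^~ y))); last by move=> y; rewrite lsum_cons; ring.
rewrite lsum_lin; ring.
Qed.

Lemma lsum_perm (A : Type) (l l' : list A) f : Permutation l l' -> lsum l f = lsum l' f.
Proof.
rewrite /lsum; elim => [|x l1 l2 _ IH|x y l1|l1 l2 l3 _ IH1 _ IH2] /=; try congruence.
ring.
Qed.

Lemma key (A : Type) (l : list A) c g rho : l <> nil ->
  (forall x, 0 < c x) -> (forall x, 0 < g x) -> 0 < rho ->
  Rpower (lsum l c) (1 + rho) * Rpower (lsum l (fun x => / g x)) (- rho) <=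
  lsum l (fun x => Rpower (g x) rho * Rpower (c x) (1 + rho)).
Proof.
move=> nn cp gp rp.
set p := 1 + rho.
have hp : 1 <= p by rewrite /p; lra.
set H := lsum l (fun x => / g x).
set S := lsum l c.
have HH : 0 < H by apply: lsum_pos => // x; apply Rinv_0_lt_compat.
have HS : 0 < S by apply: lsum_pos.
set m := S / H.
have Hm : 0 < m by apply Rdiv_lt_0_compat.
have step : forall x, (Rpower m p - p * Rpower m rho * m) * / g x + (p * Rpower m rho) * c x
   <= Rpower (g x) rho * Rpower (c x) p.
  move=> x.
  have gx := gp x; have cx := cp x.
  have gc : 0 < g x * c x by apply Rmult_lt_0_compat.
  have t := @tangent m (g x * c x) p Hm gc hp.
  have e1 : p - 1 = rho by rewrite /p; ring.
  rewrite e1 in t.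
  have -> : Rpower (g x) rho * Rpower (c x) p = / g x * Rpower (g x * c x) p.
    rewrite -Rpower_mult_distr // /p (Rpower_plus 1 rho (g x)) Rpower_1 //; field; lra.
  have hi : 0 < / g x by apply Rinv_0_lt_compat.
  have := Rmult_le_compat_l _ _ _ (Rlt_le _ _ hi) t.
  have -> : / g x * (Rpower m p + p * Rpower m rho * (g x * c x - m)) =
     (Rpower m p - p * Rpower m rho * m) * / g x + p * Rpower m rho * c x by field; lra.
  done.
eapply Rle_trans; last by apply: lsum_le step.
rewrite lsum_lin -/H -/S.
have eS : S = m * H by rewrite /m; field; lra.
have -> : (Rpower m p - p * Rpower m rho * m) * H + p * Rpower m rho * S = Rpower m p * H
  by rewrite eS; ring.
rewrite /m /Rdiv -Rpower_mult_distr //; last by apply Rinv_0_lt_compat.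
rewrite Rpower_Ropp.
have -> : Rpower (/ H) p = / Rpower H p.
  by rewrite /Rpower ln_Rinv // -exp_Ropp; f_equal; ring.
rewrite /p (Rpower_plus 1 rho H) Rpower_1 //.
have : 0 < Rpower H rho by apply exp_pos.
move=> ?; right; field; lra.
Qed.

Lemma lsum_app (A : Type) (l1 l2 : list A) f : lsum (List.app l1 l2) f = lsum l1 f + lsum l2 f.
Proof. elim: l1 => [|x l IH] /=; rewrite ?lsum_cons ?IH /lsum /=; ring. Qed.

Definition harm n := lsum (List.seq 1 n) (fun k => / INR k).

Lemma harm_le n : (1 <= n)%coq_nat -> harm n <= 1 + ln (INR n).
Proof.
elim: n => [|n IH] Hn; first by inversion Hn.
case: n IH Hn => [|n] IH Hn.
  rewrite /harm /lsum /= ln_1; lra.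
rewrite /harm List.seq_S lsum_app -/(harm n.+1).
have h := IH ltac:(apply/leP; done).
rewrite lsum_cons; change (lsum [::] _) with 0.
have Hn1 : 0 < INR n.+1 by apply lt_0_INR; apply/leP.
have e : (1 + n.+1)%coq_nat = n.+2 by [].
rewrite e.
have Hn2 : INR n.+2 = INR n.+1 + 1 by rewrite (S_INR n.+1).
have hl := ln_le_xm1 (INR n.+1 / INR n.+2) ltac:(apply Rdiv_lt_0_compat; lra).
rewrite ln_mult in hl; try lra; last by apply Rinv_0_lt_compat; lra.
rewrite ln_Rinv in hl; last lra.
have : INR n.+1 / INR n.+2 - 1 = - / INR n.+2 by rewrite Hn2; field; lra.
lra.
Qed.

Lemma inP' (T : eqType) (x : T) (s : seq T) : List.In x s <-> x \in s.
Proof.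
elim: s => [|y s IH] //=; rewrite in_cons; split.
- case=> [->|/IH ->]; [by rewrite eqxx | by rewrite orbT].
- case/orP => [/eqP ->|/IH]; by [left | right].
Qed.

Lemma uniq_NoDup (T : eqType) (s : seq T) : uniq s -> List.NoDup s.
Proof.
elim: s => [|y s IH] /=; first by constructor.
case/andP => h1 h2; constructor; last by apply IH.
by move/inP'; rewrite (negbTE h1).
Qed.

Lemma perm_G (X Y : finType) (G : X -> Y -> nat) (HG : is_cond_guessing G) y :
  Permutation (List.map (fun x => G x y) (enum X)) (List.seq 1 #|X|).
Proof.
case: (HG y) => [Hr [Hi Hs]].
apply: NoDup_Permutation.
- apply: FinFun.Injective_map_NoDup; first by move=> a b; apply Hi.
  apply: uniq_NoDup; apply enum_uniq.
- apply List.seq_NoDup.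
- move=> k; rewrite List.in_map_iff List.in_seq; split.
  + case=> x [<- _]; case: (Hr x) => h1 h2; split => //; lia.
  + case=> h1 h2; have h2' : (k <= #|X|)%coq_nat by lia.
    case: (Hs k h1 h2') => x hx; exists x; split => //.
    by apply/inP'; rewrite mem_enum.
Qed.
Unset Implicit Arguments.

Lemma lsum_zero {A : Type} (l : list A) : lsum l (fun _ => 0) = 0.
Proof. elim: l => [|x l IH] //=; rewrite lsum_cons IH; ring. Qed.

Theorem theorem2 (X Y : finType) (P : X -> Y -> R)
    (Ppos : forall (x : X) (y : Y), 0 < P x y)
    (Psum : sumR (fun x : X => sumR (fun y : Y => P x y)) = 1)
    (G : X -> Y -> nat) (HG : is_cond_guessing G)
    (rho q : R) (Hrho : 0 < rho) :
  Eq_norm P q (fun x y => Rpower (INR (G x y)) rho) >=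
  Rpower (1 + ln (INR #|X|)) (- rho) *
  (sumR (fun y : Y =>
           Rpower (sumR (fun x : X => Rpower (P x y) (q / (1 + rho)))) (1 + rho))
   / sumR (fun y : Y => sumR (fun x : X => Rpower (P x y) q))).
Proof.
have Xne : enum X <> nil.
  move=> E; move: Psum; rewrite /sumR E /=; lra.
have n1 : (1 <= #|X|)%coq_nat.
  rewrite cardE; case: (enum X) Xne => [|a s] //= _; lia.
set K := Rpower (1 + ln (INR #|X|)) (- rho).
rewrite /Eq_norm.
change (sumR (fun x => sumR (fun y => Rpower (INR (G x y)) rho * Rpower (P x y) q)))
  with (lsum (enum X) (fun x => lsum (enum Y) (fun y => Rpower (INR (G x y)) rho * Rpower (P x y) q))).
change (sumR (fun x => sumR (fun y => Rpower (P x y) q)))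
  with (lsum (enum X) (fun x => lsum (enum Y) (fun y => Rpower (P x y) q))).
change (sumR (fun y => sumR (fun x => Rpower (P x y) q)))
  with (lsum (enum Y) (fun y => lsum (enum X) (fun x => Rpower (P x y) q))).
change (sumR (fun y => Rpower (sumR (fun x => Rpower (P x y) (q / (1 + rho)))) (1 + rho)))
  with (lsum (enum Y) (fun y => Rpower (lsum (enum X) (fun x => Rpower (P x y) (q / (1 + rho)))) (1 + rho))).
rewrite !(lsum_exch (enum X) (enum Y)).
set N := lsum (enum Y) _.
set S := lsum (enum Y) _.
set A := lsum (enum Y) _.
have HK : 0 <= K by apply Rlt_le, exp_pos.
have perY : forall y, K * Rpower (lsum (enum X) (fun x => Rpower (P x y) (q / (1 + rho)))) (1 + rho)
   <= lsum (enum X) (fun x => Rpower (INR (G x y)) rho * Rpower (P x y) q).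
  move=> y.
  have gp : forall x, 0 < INR (G x y).
    move=> x; case: (HG y) => Hr _; case: (Hr x) => h1 _; apply lt_0_INR; lia.
  have cp : forall x, 0 < Rpower (P x y) (q / (1 + rho)) by move=> x; apply exp_pos.
  have k := @key X (enum X) (fun x => Rpower (P x y) (q / (1 + rho))) (fun x => INR (G x y)) rho Xne cp gp Hrho.
  have e : forall x, Rpower (Rpower (P x y) (q / (1 + rho))) (1 + rho) = Rpower (P x y) q.
    by move=> x; rewrite Rpower_mult; f_equal; field; lra.
  have e2 : lsum (enum X) (fun x => Rpower (INR (G x y)) rho * Rpower (Rpower (P x y) (q / (1 + rho))) (1 + rho))
     = lsum (enum X) (fun x => Rpower (INR (G x y)) rho * Rpower (P x y) q).
    by apply: lsum_ext => x; rewrite e.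
  rewrite e2 in k.
  apply: Rle_trans k.
  set H := lsum (enum X) (fun x => / INR (G x y)).
  have HH : 0 < H by apply: lsum_pos => // x; apply Rinv_0_lt_compat.
  have eH : H = harm #|X|.
    rewrite /H /harm.
    rewrite -(@lsum_perm nat _ _ (fun k => / INR k) (perm_G HG y)).
    rewrite /lsum List.map_map //.
  have hH : H <= 1 + ln (INR #|X|) by rewrite eH; apply harm_le.
  have hK : K <= Rpower H (- rho).
    rewrite /K !Rpower_Ropp; apply Rinv_le_contravar; first by apply exp_pos.
    apply Rle_Rpower_l; lra.
  rewrite Rmult_comm; apply Rmult_le_compat_l => //; apply Rlt_le, exp_pos.
have hN : K * A <= N.
  rewrite /A /N.
  have := @lsum_lin Y (enum Y) K 0
     (fun y => Rpower (lsum (enum X) (fun x => Rpower (P x y) (q / (1 + rho)))) (1 + rho)) (fun _ => 0).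
  rewrite lsum_zero Rmult_0_r Rplus_0_r => <-.
  apply: lsum_le => y; rewrite Rplus_0_r; apply perY.
have hS : 0 <= / S.
  have : 0 <= S.
    rewrite /S -(lsum_zero (enum Y)); apply: lsum_le => y.
    rewrite -(lsum_zero (enum X)); apply: lsum_le => x; apply Rlt_le, exp_pos.
  case=> h; first by apply Rlt_le, Rinv_0_lt_compat.
  rewrite -h Rinv_0; lra.
apply Rle_ge; rewrite /Rdiv -Rmult_assoc; apply Rmult_le_compat_r => //.
Qed.
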